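(* Let $n\ge2$, $d_1,\dots,d_n\ge2$, and let $\rho$ be a fully separable state on $\mathbb{C}^{d_1}\otimes\cdots\otimes\mathbb{C}^{d_n}$ with correlation tensor $\mathcal T$ and canonical correlation tensor $\tilde{\mathcal T}$ (defined in the context), and with moments $\bar a_i$, $\bar b_i$ as defined in the context. Then \[ \bar a_2^2\le \bar a_3\prod_{k=1}^n\sqrt{\frac{d_k-1}{2d_k}},\qquad \bar b_2^2\le \bar b_3\prod_{k=1}^n\sqrt{\frac{d_k^2-d_k+2}{2d_k^2}} . \]
   Context: For $d\ge2$, $\lambda_1^{(d)},\dots,\lambda_{d^2-1}^{(d)}$ are traceless Hermitian generators of $\mathfrak{su}(d)$ with ${\rm Tr}(\lambda_i\lambda_j)=2\delta_{ij}$, and set $\lambda_0^{(d)}=I_d$. For a multi-index $\alpha=(\alpha_1,\dots,\alpha_n)$ with $\alpha_k\in\{0,1,\dots,d_k^2-1\}$, let $m(\alpha)$ be the number of $k$ with $\alpha_k\neq0$, and define $\tilde{\mathcal T}_{\alpha_1\cdots\alpha_n}=\frac{\prod_{k:\alpha_k\ne0}d_k}{2^{m(\alpha)}\prod_{k=1}^n d_k}{\rm Tr}\big(\rho\,\lambda_{\alpha_1}^{(d_1)}\otimes\cdots\otimes\lambda_{\alpha_n}^{(d_n)}\big)$ (so $\tilde{\mathcal T}_{0\cdots0}=1/\prod_k d_k$ and $\rho=\sum_\alpha\tilde{\mathcal T}_\alpha\lambda_{\alpha_1}^{(d_1)}\otimes\cdots\otimes\lambda_{\alpha_n}^{(d_n)}$).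 The canonical correlation tensor is $\tilde{\mathcal T}$ (indices $\alpha_k\in\{0,\dots,d_k^2-1\}$) and the correlation tensor $\mathcal T$ is its restriction to $\alpha_k\in\{1,\dots,d_k^2-1\}$ for all $k$, i.e. $\mathcal T_{\alpha_1\cdots\alpha_n}=2^{-n}{\rm Tr}(\rho\,\lambda_{\alpha_1}\otimes\cdots\otimes\lambda_{\alpha_n})$. The $k$-th unfolding $\mathcal X_k$ of an $n$-index tensor $\mathcal X$ is the matrix with row index the $k$-th index and column index running over all remaining indices. The moments are $\bar a_i=\max_{1\le k\le n}{\rm Tr}\big((\mathcal T_k\mathcal T_k^{\dagger})^{i/2}\big)$ and $\bar b_i=\max_{1\le k\le n}{\rm Tr}\big((\tilde{\mathcal T}_k\tilde{\mathcal T}_k^{\dagger})^{i/2}\big)$, i.e. $\bar a_i=\|\mathcal T\|_i^i$, $\bar b_i=\|\tilde{\mathcal T}\|_i^i$ where the Schatten-$p$ norm of a tensor is the maximum of the Schatten-$p$ norms of its unfoldings. A state is fully separable if it is a convex combination $\sum_ip_i\rho_i^{(1)}\otimes\cdots\otimes\rho_i^{(n)}$ of product states. *)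

(* Defs.v *)
(* Complex scalars: an arbitrary numClosedFieldType C
   (e.g. complex numbers over a real closed field). *)
From HB Require Import structures.
From mathcomp Require Import all_boot all_order all_algebra.
Set Implicit Arguments. Unset Strict Implicit. Unset Printing Implicit Defensive.
Import Order.TTheory GRing.Theory Num.Theory.
Local Open Scope ring_scope.

Section Defs.
Variable C : numClosedFieldType.

Definition adj m p (M : 'M[C]_(m, p)) : 'M[C]_(p, m) := (map_mx Num.conj M)^T.

Definition psd m (A : 'M[C]_m) : Prop :=
  adj A = A /\ forall v : 'rV[C]_m, 0 <= (v *m A *m adj v) 0 0.
Definition density m (A : 'M[C]_m) : Prop := psd A /\ \tr A = 1.

Definition su_generators (d : nat) (L : nat -> 'M[C]_d) : Prop :=
  L 0%N = 1%:M /\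
  (forall a, (1 <= a < d ^ 2)%N -> adj (L a) = L a /\ \tr (L a) = 0) /\
  (forall a b, (1 <= a < d ^ 2)%N -> (1 <= b < d ^ 2)%N ->
     \tr (L a *m L b) = (a == b)%:R *+ 2).

Variable n : nat.

Definition MIdx (e : 'I_n -> nat) := {dffun forall k : 'I_n, 'I_(e k)}.

Section Space.
Variable d : 'I_n -> nat.
(* computational basis of C^{d_1} (x) ... (x) C^{d_n}, indexed by MIdx d,
   enumerated via enum_val *)
Definition dimH := #|{: MIdx d}|.
Definition bas (i : 'I_dimH) : MIdx d := enum_val i.

Definition tens (A : forall k : 'I_n, 'M[C]_(d k)) : 'M[C]_dimH :=
  \matrix_(i, j) \prod_(k < n) A k (bas i k) (bas j k).

Definition product_state (A : forall k : 'I_n, 'M[C]_(d k)) : Prop :=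
  forall k, density (A k).

Definition fully_separable (rho : 'M[C]_dimH) : Prop :=
  exists (m : nat) (p : 'I_m -> C) (sig : 'I_m -> forall k : 'I_n, 'M[C]_(d k)),
    [/\ forall i, 0 <= p i, \sum_(i < m) p i = 1,
        forall i, product_state (sig i) &
        rho = \sum_(i < m) p i *: tens (sig i)].

Variable L : forall k : 'I_n, nat -> 'M[C]_(d k).

Definition canon_corr (rho : 'M[C]_dimH) (al : MIdx (fun k => d k ^ 2)%N) : C :=
  (\prod_(k < n | val (al k) != 0%N) (d k)%:R)
  / (2 ^+ #|[pred k | val (al k) != 0%N]| * \prod_(k < n) (d k)%:R)
  * \tr (rho *m tens (fun k => L k (val (al k)))).

(* correlation tensor, indices alpha_k in {1, ..., d_k^2 - 1}
   (stored shifted by one: index a : 'I_(d_k^2-1) stands for a+1) *)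
Definition corr (rho : 'M[C]_dimH) (al : MIdx (fun k => d k ^ 2 - 1)%N) : C :=
  (2 ^+ n)^-1 * \tr (rho *m tens (fun k => L k (val (al k)).+1)).
End Space.

(* X_k X_k^dagger for the k-th unfolding X_k of a tensor X *)
Definition unfold_gram (e : 'I_n -> nat) (X : MIdx e -> C) (k : 'I_n)
  : 'M[C]_(e k) :=
  \matrix_(a, b) \sum_(be : MIdx e) \sum_(ga : MIdx e)
     (if [&& be k == a, ga k == b & [forall j, (j != k) ==> (be j == ga j)]]
      then X be * Num.conj (X ga) else 0).

(* Tr (G^{p/2}) for a positive semidefinite G: sum of eigenvalues^(p/2) *)
Definition trpow_half (p : nat) r (G : 'M[C]_r) : C :=
  \sum_(j < r) (sqrtC (spectral_diag G 0 j)) ^+ p.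

(* ||X||_p^p = max_k Tr((X_k X_k^dagger)^{p/2}) *)
Definition moment (p : nat) (e : 'I_n -> nat) (X : MIdx e -> C) : C :=
  \big[Num.max/0]_(k < n) trpow_half p (unfold_gram X k).

End Defs.

(* Main.v *)
Require Import Defs.
From HB Require Import structures.
From mathcomp Require Import all_boot all_order all_algebra.
From mathcomp Require Import ring lra zify sesquilinear spectral.
Import Order.TTheory GRing.Theory Num.Theory.
Local Open Scope ring_scope.

Module Aux.
Set Implicit Arguments. Unset Strict Implicit. Unset Printing Implicit Defensive.
Section S.
Variable C : numClosedFieldType.

Lemma conj_ge0 (x : C) : 0 <= x -> x^* = x.
Proof. by move=> /ger0_norm <-; rewrite conj_normC. Qed.

Lemma sum_norm2_ge0 (I : finType) (f : I -> C) : 0 <= \sum_i `|f i| ^+ 2.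
Proof. by apply: sumr_ge0 => i _; rewrite exprn_ge0. Qed.

Lemma bessel (I J : finType) (f : J -> I -> C) (y : I -> C) :
 (forall b b', b != b' -> \sum_i f b i * (f b' i)^* = 0) ->
 \sum_b (\sum_i `|f b i|^+2)^-1 * `|\sum_i y i * (f b i)^*|^+2
   <= \sum_i `|y i|^+2.
Proof.
move=> orth.
pose c b := \sum_i `|f b i|^+2.
pose g b := \sum_i y i * (f b i)^*.
pose t b := g b / c b.
pose s i := \sum_b t b * f b i.
pose W := \sum_b (c b)^-1 * `|g b|^+2.
have cr b : (c b)^* = c b by apply/conj_ge0/sum_norm2_ge0.
have H0 : 0 <= \sum_i `|y i - s i| ^+ 2 by apply: sum_norm2_ge0.
have E1 : \sum_i y i * (s i)^* = W.
  rewrite /W; under eq_bigr do rewrite rmorph_sum mulr_sumr.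
  rewrite exchange_big; apply: eq_bigr => b _.
  rewrite /g /t; under eq_bigr do rewrite rmorphM mulrCA.
  rewrite -mulr_sumr rmorphM /= fmorphV /= cr normCK.
  by rewrite rmorph_sum /=; ring.
have E2 : \sum_i s i * (y i)^* = W.
  rewrite /W /s; under eq_bigr do rewrite mulr_suml.
  rewrite exchange_big; apply: eq_bigr => b _.
  rewrite /g /t; under eq_bigr do rewrite -mulrA.
  rewrite -mulr_sumr normCK rmorph_sum /=.
  rewrite [X in _ = _ * (_ * X)](eq_bigr (fun i => f b i * (y i)^*)); last by move=> i _; rewrite rmorphM /= conjCK mulrC.
  rewrite /g.
  ring.
have E3 : \sum_i s i * (s i)^* = W.
  rewrite /W /s; under eq_bigr do rewrite rmorph_sum mulr_suml.
  rewrite exchange_big; apply: eq_bigr => b _.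
  under eq_bigr do rewrite mulr_sumr. rewrite exchange_big.
  rewrite (bigD1 b) //= [X in _ + X]big1 ?addr0; last first.
    move=> b' nb; transitivity (t b * (t b')^* * \sum_i f b i * (f b' i)^*); last by rewrite orth ?mulr0 // eq_sym.
    rewrite mulr_sumr; apply: eq_bigr => i _; rewrite rmorphM /=; ring.
  transitivity (t b * (t b)^* * c b).
    rewrite /c mulr_sumr; apply: eq_bigr => i _; rewrite rmorphM normCK; ring.
  rewrite /t rmorphM /= fmorphV /= cr normCK.
  have [->|cn0] := eqVneq (c b) 0; first by rewrite invr0 !mulr0 mul0r.
  by field.
suff E : \sum_i `|y i - s i| ^+ 2 = \sum_i `|y i| ^+ 2 - W by rewrite E subr_ge0 in H0; exact: H0.
transitivity (\sum_i (`|y i| ^+ 2 - y i * (s i)^* - s i * (y i)^* + s i * (s i)^*)).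
  by apply: eq_bigr => i _; rewrite !normCK rmorphB /=; ring.
rewrite !big_split /= !sumrN E1 E2 E3; ring.
Qed.


Lemma normC_sqrt (x : C) : `|x| = sqrtC (`|x| ^+ 2).
Proof. by rewrite sqrCK. Qed.

Lemma cauchy_schwarz (I : finType) (a b : I -> C) :
  `|\sum_i a i * b i| <= sqrtC (\sum_i `|a i|^+2) * sqrtC (\sum_i `|b i|^+2).
Proof.
have H := @bessel _ 'I_1 (fun _ i => (b i)^*) a.
have {H} := H (fun x y => ltac:(by rewrite !ord1 eqxx)).
rewrite big_ord1.
under eq_bigr do rewrite norm_conjC.
under [X in `|X|]eq_bigr do rewrite conjCK.
move=> H.
have [c0|cn0] := eqVneq (\sum_i `|b i| ^+ 2) 0.
  rewrite big1 ?normr0 ?mulr_ge0 ?sqrtC_ge0 ?sum_norm2_ge0 // => i _.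
  have /psumr_eq0P := c0; move=> /(_ (fun i _ => exprn_ge0 2 (normr_ge0 (b i)))) /(_ i isT).
  by move/eqP; rewrite expf_eq0 /= normr_eq0 => /eqP ->; rewrite mulr0.
have cp : 0 < \sum_i `|b i| ^+ 2 by rewrite lt_def cn0 sum_norm2_ge0.
rewrite normC_sqrt -sqrtCM ?qualifE /= ?sum_norm2_ge0 //.
rewrite ler_sqrtC ?qualifE /= ?exprn_ge0 ?mulr_ge0 ?sum_norm2_ge0 //.
by rewrite mulrC -ler_pdivrMl.
Qed.

Lemma unitary_norm (I J : finType) (P : J -> I -> C) (x : I -> C) :
  (forall a b, \sum_j P j a * (P j b)^* = (a == b)%:R) ->
  \sum_j `|\sum_a P j a * x a|^+2 = \sum_a `|x a|^+2.
Proof.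
move=> hP.
transitivity (\sum_j \sum_a \sum_b P j a * (P j b)^* * (x a * (x b)^*)).
  apply: eq_bigr => j _; rewrite normCK rmorph_sum mulr_suml; apply: eq_bigr => a _.
  rewrite mulr_sumr; apply: eq_bigr => b _; rewrite rmorphM /=; ring.
rewrite exchange_big; apply: eq_bigr => a _.
rewrite exchange_big (bigD1 a) //= [X in _ + X]big1 ?addr0.
  by rewrite -mulr_suml hP eqxx mul1r normCK.
by move=> b nb; rewrite -mulr_suml hP eq_sym (negbTE nb) mul0r.
Qed.

Lemma power_sum (I : finType) (s : I -> C) : (forall j, 0 <= s j) ->
  (\sum_j s j ^+ 2) ^+ 2 <= (\sum_j s j ^+ 3) * \sum_j s j.
Proof.
move=> s0.
have H : 0 <= \sum_j \sum_l s j * s l * (s j - s l) ^+ 2.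
  apply: sumr_ge0 => j _; apply: sumr_ge0 => l _; apply: mulr_ge0; first exact: mulr_ge0.
  by apply: real_exprn_even_ge0 => //; apply: rpredB; exact: ger0_real.
pose A := \sum_j \sum_l (s j ^+ 3 * s l - s j ^+ 2 * s l ^+ 2).
have EA : A = (\sum_j s j ^+ 3) * \sum_j s j - (\sum_j s j ^+ 2) ^+ 2.
  rewrite expr2 !big_distrlr /= -sumrB; apply: eq_bigr => j _; by rewrite -sumrB.
have E : \sum_j \sum_l s j * s l * (s j - s l) ^+ 2 = A + A.
  transitivity (\sum_j \sum_l ((s j ^+ 3 * s l - s j ^+ 2 * s l ^+ 2) + (s l ^+ 3 * s j - s l ^+ 2 * s j ^+ 2))).
    by apply: eq_bigr => j _; apply: eq_bigr => l _; ring.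
  under eq_bigr do rewrite big_split /=.
  by rewrite big_split /= [X in _ + X]exchange_big.
by move: H; rewrite E EA -mulr2n pmulrn_lge0 // subr_ge0.
Qed.

Local Open Scope sesquilinear_scope.

Lemma tCE m p (M : 'M[C]_(m, p)) a b : (M ^t*) a b = (M b a)^*.
Proof. by rewrite !mxE. Qed.

Section Gram.
Variables (r : nat) (I : finType) (T : 'I_r -> I -> C) (G : 'M[C]_r).
Hypothesis HG : forall a b, G a b = \sum_c T a c * (T b c)^*.

Lemma gram_tC : G ^t* = G.
Proof.
apply/matrixP => a b; rewrite tCE !HG rmorph_sum; apply: eq_bigr => c _.
by rewrite rmorphM /= conjCK mulrC.
Qed.

Lemma gram_normal : G \is normalmx.
Proof. by apply/normalmxP; rewrite gram_tC. Qed.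

Let P := spectralmx G.
Let mu := spectral_diag G.

Lemma gram_PP : P *m P ^t* = 1%:M.
Proof. exact/unitarymxP/spectral_unitarymx. Qed.

Lemma gram_PtP : P ^t* *m P = 1%:M.
Proof.
by rewrite -invmx_unitary ?spectral_unitarymx // mulVmx // spectral_unit.
Qed.

Lemma gram_diag : P *m G *m P ^t* = diag_mx mu.
Proof.
have E := orthomx_spectralP gram_normal.
rewrite [in LHS]E invmx_unitary ?spectral_unitarymx // -/P.
by rewrite !mulmxA gram_PP mul1mx -!mulmxA gram_PP mulmx1.
Qed.

Definition gV j c := \sum_a P j a * T a c.

Lemma gram_orth j l : \sum_c gV j c * (gV l c)^* = (j == l)%:R * mu 0 j.
Proof.
have := congr1 (fun M : 'M[C]_r => M j l) gram_diag.
rewrite [RHS]mxE mulr_natl => <-.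
transitivity (\sum_a \sum_b \sum_c P j a * T a c * ((P l b)^* * (T b c)^*)).
  under [RHS]eq_bigr do rewrite exchange_big.
  rewrite [RHS]exchange_big; apply: eq_bigr => c _.
  rewrite /gV mulr_suml; apply: eq_bigr => a _.
  rewrite rmorph_sum mulr_sumr; apply: eq_bigr => b _; rewrite rmorphM /=; ring.
rewrite mxE exchange_big; apply: eq_bigr => b _.
rewrite mxE mulr_suml; apply: eq_bigr => a _.
rewrite tCE HG mulr_sumr mulr_suml; apply: eq_bigr => c _; ring.
Qed.

Lemma gram_mu j : mu 0 j = \sum_c `|gV j c| ^+ 2.
Proof.
by have := gram_orth j j; rewrite eqxx mul1r => <-; apply: eq_bigr => c _; rewrite normCK.
Qed.

Lemma gram_mu_ge0 j : 0 <= mu 0 j.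
Proof. by rewrite gram_mu sum_norm2_ge0. Qed.

Lemma gram_Pcol a b : \sum_j P j a * (P j b)^* = (a == b)%:R.
Proof.
have := congr1 (fun M : 'M[C]_r => M b a) gram_PtP.
rewrite !mxE eq_sym => <-; apply: eq_bigr => j _; rewrite mxE mulrC.
by rewrite mxE.
Qed.

Lemma gram_sum_mu : \sum_j mu 0 j = \sum_a \sum_c `|T a c| ^+ 2.
Proof.
under eq_bigr do rewrite gram_mu.
rewrite exchange_big [RHS]exchange_big; apply: eq_bigr => c _.
by rewrite /gV (unitary_norm (fun a => T a c) gram_Pcol).
Qed.

Lemma gram_tracenorm (m : nat) (p : 'I_m -> C) (x : 'I_m -> 'I_r -> C)
  (y : 'I_m -> I -> C) :
  (forall i, 0 <= p i) -> (forall a c, T a c = \sum_i p i * x i a * y i c) ->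
  \sum_j sqrtC (mu 0 j) <=
  \sum_i p i * (sqrtC (\sum_a `|x i a|^+2) * sqrtC (\sum_c `|y i c|^+2)).
Proof.
move=> p0 HT.
pose s j := sqrtC (mu 0 j).
have s0 j : 0 <= s j by rewrite sqrtC_ge0 gram_mu_ge0.
pose A i j := \sum_a P j a * x i a.
pose B i j := (s j)^-1 * \sum_c y i c * (gV j c)^*.
pose z i := \sum_j A i j * B i j.
have gVE j c : gV j c = \sum_i p i * A i j * y i c.
  rewrite /gV /A; under eq_bigr do rewrite HT mulr_sumr.
  rewrite exchange_big; apply: eq_bigr => i _.
  rewrite mulr_sumr mulr_suml; apply: eq_bigr => a _; ring.
have E1 : \sum_j s j = \sum_i p i * z i.
  transitivity (\sum_j (s j)^-1 * \sum_c gV j c * (gV j c)^*).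
    apply: eq_bigr => j _; rewrite gram_orth eqxx mul1r -(sqrtCK (mu 0 j)) -/(s j).
    have [->|sn0] := eqVneq (s j) 0; first by rewrite invr0 mul0r.
    by field.
  rewrite /z; under [RHS]eq_bigr do rewrite mulr_sumr.
  rewrite exchange_big; apply: eq_bigr => j _.
  rewrite /B; under [RHS]eq_bigr do rewrite mulr_sumr mulr_sumr mulr_sumr.
  rewrite exchange_big mulr_sumr; apply: eq_bigr => c _.
  rewrite gVE !mulr_suml mulr_sumr; apply: eq_bigr => i _; ring.
have Ez i : `|z i| <= sqrtC (\sum_a `|x i a|^+2) * sqrtC (\sum_c `|y i c|^+2).
  apply: (le_trans (cauchy_schwarz _ _)).
  have -> : \sum_j `|A i j| ^+ 2 = \sum_a `|x i a| ^+ 2.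
    by rewrite /A (unitary_norm (x i) gram_Pcol).
  apply: ler_wpM2l; first by rewrite sqrtC_ge0 sum_norm2_ge0.
  rewrite ler_sqrtC ?qualifE /= ?sum_norm2_ge0 //.
  have := @bessel _ _ gV (y i) (fun j l jl => ltac:(by rewrite gram_orth (negbTE jl) mul0r)).
  apply: le_trans; rewrite le_eqVlt; apply/orP; left; apply/eqP.
  apply: eq_bigr => j _; rewrite -gram_mu -(sqrtCK (mu 0 j)) -/(s j) /B.
  by rewrite normrM exprMn normfV (ger0_norm (s0 j)) exprVn.
have -> : \sum_j sqrtC (mu 0 j) = `|\sum_i p i * z i|.
  by rewrite -E1 ger0_norm // sumr_ge0.
apply: (le_trans (ler_norm_sum _ _ _)); apply: ler_sum => i _.
by rewrite normrM (ger0_norm (p0 i)) ler_wpM2l.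
Qed.
End Gram.
End S.

Lemma big_dffun_prod (R : comNzRingType) n (e : 'I_n -> nat)
  (f : forall j : 'I_n, 'I_(e j) -> R) :
  \sum_(be : MIdx e) \prod_j f j (be j) = \prod_j \sum_(a : 'I_(e j)) f j a.
Proof.
pose T_ := fun j : 'I_n => 'I_(e j).
rewrite (reindex (@dffun_of_fprod _ T_)); last exact/onW_bij/dffun_of_fprod_bij.
under eq_bigr do under eq_bigr do rewrite ffunE.
pose P_ := fun i => [ffun a : T_ i => f i a].
transitivity (\sum_(t : fprod T_) \prod_(i in 'I_n) P_ i (t i)).
  by apply: eq_bigr => t _; apply: eq_bigr => i _; rewrite ffunE.
rewrite big_fprod.
rewrite -(bigA_distr_big_dep (tagged_with T_) (fun i j => untag 0 (P_ i) j)). apply: eq_bigr => i _.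
transitivity (\sum_(a : T_ i) P_ i a); last by apply: eq_bigr => a _; rewrite ffunE.
by rewrite (big_tag (fun i (a : T_ i) => P_ i a) i).
Qed.

Section U.
Variables (C : numClosedFieldType) (n : nat) (e : 'I_n -> nat).

Unset Implicit Arguments.
Definition upd (c : MIdx e) (k : 'I_n) (a : 'I_(e k)) : MIdx e :=
  @finfun _ (fun j => 'I_(e j)) (fun j => if j == k then insubd (c j) (val a) else c j).
Set Implicit Arguments.

Lemma upd_k (c : MIdx e) k a : upd c k a k = a.
Proof. by apply: val_inj; rewrite ffunE eqxx val_insubd ltn_ord. Qed.

Lemma upd_j (c : MIdx e) k a j : j != k -> upd c k a j = c j.
Proof. by move=> /negbTE jk; rewrite ffunE jk. Qed.

Lemma updK (c : MIdx e) k a b : upd (upd c k a) k b = upd c k b :> MIdx e.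
Proof.
apply/ffunP => j; have [->|jk] := eqVneq j k; first by rewrite !upd_k.
by rewrite !upd_j.
Qed.

Lemma upd_eq (c d : MIdx e) k a :
  (upd c k a == d) = (d k == a) && [forall j, (j != k) ==> (c j == d j)].
Proof.
apply/eqP/andP => [<- | [/eqP dk /forallP H]].
  split; first by rewrite upd_k.
  by apply/forallP => j; apply/implyP => jk; rewrite upd_j.
apply/ffunP => j; have [->|jk] := eqVneq j k; first by rewrite upd_k dk.
by rewrite upd_j //; apply/eqP; have := H j; rewrite jk.
Qed.

Lemma upd_self (c : MIdx e) k a : (upd c k a == c) = (c k == a).
Proof.
rewrite upd_eq; case: (c k == a) => //=.
by apply/forallP => j; apply/implyP.
Qed.

Lemma reindex_upd (F : MIdx e -> C) k (a a0 : 'I_(e k)) :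
  \sum_(be : MIdx e | be k == a) F be = \sum_(c : MIdx e | c k == a0) F (upd c k a).
Proof.
rewrite (reindex_onto (fun c => upd c k a) (fun be => upd be k a0)); last first.
  by move=> be /eqP bek; rewrite updK; apply/eqP; rewrite upd_self bek.
apply: eq_bigl => c; rewrite upd_k eqxx /= updK upd_self.
by [].
Qed.

Definition Tk (X : MIdx e -> C) k (a0 a : 'I_(e k)) (c : MIdx e) : C :=
  if c k == a0 then X (upd c k a) else 0.

Lemma unfold_gramE (X : MIdx e -> C) k (a0 a b : 'I_(e k)) :
  unfold_gram X k a b = \sum_c Tk X a0 a c * (Tk X a0 b c)^*.
Proof.
rewrite mxE.
transitivity (\sum_(be : MIdx e) (if be k == a then X be * (X (upd be k b))^* else 0)).
  apply: eq_bigr => be _.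
  have [bek|bek] := eqVneq (be k) a; last first.
    by rewrite big1 // => ga _; rewrite (negbTE bek).
  rewrite -big_mkcond /= (big_pred1 (upd be k b)) // => ga.
  by rewrite /pred1 /=; apply/esym; apply: etrans (eq_sym _ _) _; exact: upd_eq.
rewrite -big_mkcond (reindex_upd _ a a0) big_mkcond; apply: eq_bigr => c _.
by rewrite /Tk; case: (c k == a0); rewrite ?updK ?mul0r.
Qed.

Lemma Tk_norm (X : MIdx e -> C) k (a0 : 'I_(e k)) :
  \sum_a \sum_c `|Tk X a0 a c| ^+ 2 = \sum_be `|X be| ^+ 2.
Proof.
transitivity (\sum_(a : 'I_(e k)) \sum_(be : MIdx e | be k == a) `|X be| ^+ 2).
  apply: eq_bigr => a _; rewrite (reindex_upd _ a a0) [RHS]big_mkcond.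
  by apply: eq_bigr => c _; rewrite /Tk; case: (c k == a0); rewrite ?normr0 ?expr0n.
under eq_bigr do rewrite big_mkcond.
rewrite exchange_big; apply: eq_bigr => be _.
by rewrite -big_mkcond /= (big_pred1 (be k)) // => a; rewrite eq_sym.
Qed.

Unset Implicit Arguments.
Variables (m : nat) (p : 'I_m -> C) (u : 'I_m -> forall j : 'I_n, 'I_(e j) -> C).
Set Implicit Arguments.

Definition yk k (a0 : 'I_(e k)) i (c : MIdx e) : C :=
  if c k == a0 then \prod_(j | j != k) u i j (c j) else 0.

Lemma Tk_decomp (X : MIdx e -> C) k (a0 a : 'I_(e k)) c :
  (forall be, X be = \sum_i p i * \prod_j u i j (be j)) ->
  Tk X a0 a c = \sum_i p i * u i k a * yk a0 i c.
Proof.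
move=> HX; rewrite /Tk /yk; case: (c k == a0); last first.
  by rewrite big1 // => i _; rewrite mulr0.
rewrite HX; apply: eq_bigr => i _; rewrite (bigD1 k) //= upd_k mulrA; congr (_ * _).
by apply: eq_bigr => j jk; rewrite upd_j.
Qed.

Lemma yk_norm k (a0 : 'I_(e k)) i :
  \sum_c `|yk a0 i c| ^+ 2 = \prod_(j | j != k) \sum_b `|u i j b| ^+ 2.
Proof.
pose h := fun j (b : 'I_(e j)) => if j == k then ((val b == val a0)%:R : C) else `|u i j b| ^+ 2.
transitivity (\sum_(c : MIdx e) \prod_j h j (c j)).
  apply: eq_bigr => c _; rewrite (bigD1 k) //= /h eqxx val_eqE /yk.
  case: (c k == a0); last by rewrite normr0 expr0n mul0r.
  rewrite mul1r normr_prod -prodrXl; apply: eq_bigr => j jk.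
  by rewrite (negbTE jk).
rewrite big_dffun_prod (bigD1 k) //= /h eqxx.
rewrite (bigD1 a0) //= eqxx big1 ?addr0 ?mul1r.
  by apply: eq_bigr => j jk; rewrite (negbTE jk).
by move=> b /negbTE; rewrite -val_eqE => ->.
Qed.
End U.

Section Main.
Variable C : numClosedFieldType.

Lemma sqrtC_prod (I : finType) (P : pred I) (f : I -> C) :
  (forall i, 0 <= f i) -> sqrtC (\prod_(i | P i) f i) = \prod_(i | P i) sqrtC (f i).
Proof.
move=> f0.
suff H : forall r : seq I, 0 <= \prod_(i <- r | P i) f i /\
  sqrtC (\prod_(i <- r | P i) f i) = \prod_(i <- r | P i) sqrtC (f i) by case: (H (index_enum I)).
elim=> [|x r [IH1 IH2]]; first by rewrite !big_nil sqrtC1 ler01.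
rewrite !big_cons; case: (P x) => //.
by rewrite mulr_ge0 // sqrtCM ?IH2 // qualifE /=.
Qed.

Lemma max_ge2 (x y : C) : 0 <= x -> 0 <= y -> x <= Num.max x y /\ y <= Num.max x y.
Proof.
move=> x0 y0; rewrite /Order.max; case: ifP => h; first by rewrite lexx ltW.
by rewrite lexx real_leNgt ?h // ger0_real.
Qed.

Lemma bigmax_ge n (F : 'I_n -> C) k0 : (forall k, 0 <= F k) ->
  0 <= \big[Num.max/0]_(k < n) F k /\ F k0 <= \big[Num.max/0]_(k < n) F k.
Proof.
move=> F0.
suff H : forall r : seq 'I_n, 0 <= \big[Num.max/0]_(k <- r) F k /\
  forall k, k \in r -> F k <= \big[Num.max/0]_(k <- r) F k.
  by case: (H (index_enum 'I_n)) => H1 H2; split => //; apply: H2; rewrite mem_index_enum.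
elim=> [|x r [IH1 IH2]]; first by rewrite big_nil lexx.
rewrite big_cons; have [M1 M2] := max_ge2 (F0 x) IH1.
split; first exact: le_trans (F0 x) M1.
move=> k; rewrite inE => /orP [/eqP -> //| kr].
exact: le_trans (IH2 k kr) M2.
Qed.

Lemma bigmax_const n (x : C) : 0 <= x -> (0 < n)%N -> \big[Num.max/0]_(k < n) x = x.
Proof.
move=> x0 n0.
suff H : forall r : seq 'I_n, \big[Num.max/0]_(k <- r) x = if r is [::] then 0 else x.
  rewrite H; case E: (index_enum 'I_n) => //.
  by have := mem_index_enum (Ordinal n0); rewrite E.
elim=> [|y r IH]; first by rewrite big_nil.
rewrite big_cons IH; case: r {IH} => [|z r]; last by rewrite /Order.max ltxx.
by rewrite /Order.max; case: ifP => // h; move: (le_lt_trans x0 h); rewrite ltxx.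
Qed.


Lemma gram_k n (e : 'I_n -> nat) m (p : 'I_m -> C)
  (u : 'I_m -> forall j : 'I_n, 'I_(e j) -> C) (X : MIdx e -> C) (cb : 'I_n -> C) k :
  (0 < e k)%N -> (forall i, 0 <= p i) -> \sum_i p i = 1 ->
  (forall be, X be = \sum_i p i * \prod_j u i j (be j)) ->
  (forall i j, \sum_b `|u i j b|^+2 <= cb j) -> (forall j, 0 <= cb j) ->
  [/\ trpow_half 2 (unfold_gram X k) = \sum_be `|X be| ^+ 2,
       0 <= trpow_half 3 (unfold_gram X k) &
       (\sum_be `|X be| ^+ 2) ^+ 2 <= trpow_half 3 (unfold_gram X k) * \prod_j sqrtC (cb j)].
Proof.
move=> ek p0 p1 HX Hu c0.
pose a0 : 'I_(e k) := Ordinal ek.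
pose T := Tk X a0.
have HG : forall a b, unfold_gram X k a b = \sum_c T a c * (T b c)^*.
  by move=> a b; rewrite (unfold_gramE _ a0).
pose G := unfold_gram X k.
pose mu := spectral_diag G.
have mu0 j : 0 <= mu 0 j := gram_mu_ge0 HG j.
have E2 : trpow_half 2 G = \sum_be `|X be| ^+ 2.
  rewrite /trpow_half; under eq_bigr do rewrite sqrtCK.
  by rewrite (gram_sum_mu HG) Tk_norm.
split => //.
  by apply: sumr_ge0 => j _; rewrite exprn_ge0 // sqrtC_ge0.
rewrite -E2 /trpow_half.
apply: (le_trans (power_sum _)) => [j|]; first by rewrite sqrtC_ge0.
apply: ler_wpM2l; first by apply: sumr_ge0 => j _; rewrite exprn_ge0 // sqrtC_ge0.
have HT : forall a c, T a c = \sum_i p i * u i k a * yk u a0 i c.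
  by move=> a c; rewrite /T (Tk_decomp _ _ _ HX).
apply: (le_trans (gram_tracenorm HG p0 HT)).
apply: (@le_trans _ _ (\sum_i p i * \prod_j sqrtC (cb j))); last by rewrite -mulr_suml p1 mul1r.
apply: ler_sum => i _.
apply: ler_wpM2l => //.
rewrite yk_norm -sqrtCM ?qualifE /= ?sum_norm2_ge0 //; last first.
  by apply: prodr_ge0 => j _; apply: sum_norm2_ge0.
rewrite -(@bigD1 _ _ _ _ k predT (fun j => \sum_(b : 'I_(e j)) `|u i j b| ^+ 2)) //.
rewrite sqrtC_prod; last by move=> j; apply: sum_norm2_ge0.
apply: ler_prod => j _; rewrite sqrtC_ge0 sum_norm2_ge0 /=.
by rewrite ler_sqrtC ?qualifE /= ?sum_norm2_ge0 ?c0 ?Hu.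
Qed.

Lemma moment_bound n (e : 'I_n -> nat) m (p : 'I_m -> C)
  (u : 'I_m -> forall j : 'I_n, 'I_(e j) -> C) (X : MIdx e -> C) (cb : 'I_n -> C) :
  (0 < n)%N -> (forall k, 0 < e k)%N -> (forall i, 0 <= p i) -> \sum_i p i = 1 ->
  (forall be, X be = \sum_i p i * \prod_j u i j (be j)) ->
  (forall i j, \sum_b `|u i j b|^+2 <= cb j) -> (forall j, 0 <= cb j) ->
  moment 2 X ^+ 2 <= moment 3 X * \prod_j sqrtC (cb j).
Proof.
move=> n0 e0 p0 p1 HX Hu c0.
have H k := gram_k (k:=k) (e0 k) p0 p1 HX Hu c0.
have -> : moment 2 X = \sum_be `|X be| ^+ 2.
  have H2 k : trpow_half 2 (unfold_gram X k) = \sum_be `|X be| ^+ 2 by case: (H k).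
  rewrite /moment; under eq_bigr do rewrite H2.
  by rewrite bigmax_const // sum_norm2_ge0.
pose k0 : 'I_n := Ordinal n0.
case: (H k0) => _ _ H3; apply: (le_trans H3).
apply: ler_wpM2r; first by apply: prodr_ge0 => j _; rewrite sqrtC_ge0.
have HB := @bigmax_ge n (fun k => trpow_half 3 (unfold_gram X k)) k0.
have [_ HB2] := HB (fun k => ltac:(by case: (H k))).
exact: HB2.
Qed.
End Main.

Section Phys.
Variable C : numClosedFieldType.

Lemma sum_bas n (d : 'I_n -> nat) (F : MIdx d -> C) :
  \sum_(i < dimH d) F (bas i) = \sum_be F be.
Proof. by rewrite /bas /dimH -big_enum_val. Qed.

Lemma tr_tens n (d : 'I_n -> nat) (A B : forall k : 'I_n, 'M[C]_(d k)) :
  \tr (tens A *m tens B) = \prod_k \tr (A k *m B k).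
Proof.
rewrite /mxtrace.
transitivity (\sum_(be : MIdx d) \sum_(ga : MIdx d) \prod_k (A k (be k) (ga k) * B k (ga k) (be k))).
  rewrite -(sum_bas (fun be => \sum_(ga : MIdx d) \prod_k (A k (be k) (ga k) * B k (ga k) (be k)))).
  apply: eq_bigr => i _; rewrite mxE -(sum_bas (fun ga => \prod_k (A k (bas i k) (ga k) * B k (ga k) (bas i k)))).
  by apply: eq_bigr => l _; rewrite !mxE big_split.
under [LHS]eq_bigr => be _ do rewrite (big_dffun_prod (fun k (b : 'I_(d k)) => A k (be k) b * B k b (be k))).
rewrite (big_dffun_prod (fun k (a : 'I_(d k)) => \sum_b A k a b * B k b a)).
by apply: eq_bigr => k _; apply: eq_bigr => a _; rewrite mxE.
Qed.

Lemma qformE m (A : 'M[C]_m) (v : 'rV[C]_m) :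
  (v *m A *m adj v) 0 0 = \sum_a \sum_b v 0 a * A a b * (v 0 b)^*.
Proof.
rewrite mxE; under eq_bigr do rewrite mxE mulr_suml.
rewrite exchange_big; apply: eq_bigr => a _; apply: eq_bigr => b _.
by rewrite !mxE.
Qed.

Lemma sum2 m (F : 'I_m -> C) x y al be :
  \sum_b F b * (al * (b == x)%:R + be * (b == y)%:R) = F x * al + F y * be.
Proof.
under eq_bigr do rewrite mulrDr.
rewrite big_split /=; congr (_ + _).
  rewrite (bigD1 x) //= eqxx mulr1 big1 ?addr0 // => b /negbTE ->; by rewrite mulr0 mulr0.
rewrite (bigD1 y) //= eqxx mulr1 big1 ?addr0 // => b /negbTE ->; by rewrite mulr0 mulr0.
Qed.

Lemma qf2 m (A : 'M[C]_m) x y al be : psd A ->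
  0 <= al * A x x * al^* + al * A x y * be^* + be * A y x * al^* + be * A y y * be^*.
Proof.
case=> _ H; have := H (\row_a (al * (a == x)%:R + be * (a == y)%:R)).
rewrite qformE.
have E : forall a, \sum_b (\row_a0 (al * (a0 == x)%:R + be * (a0 == y)%:R)) 0 a * A a b *
   ((\row_a0 (al * (a0 == x)%:R + be * (a0 == y)%:R)) 0 b)^* =
   (A a x * al^* + A a y * be^*) * (al * (a == x)%:R + be * (a == y)%:R).
  move=> a; transitivity ((al * (a == x)%:R + be * (a == y)%:R) *
     \sum_b A a b * (al^* * (b == x)%:R + be^* * (b == y)%:R)); last by rewrite sum2 mulrC.
  rewrite mulr_sumr; apply: eq_bigr => b _; rewrite !mxE.
  rewrite rmorphD !rmorphM /= !rmorph_nat; ring.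
under eq_bigr do rewrite E.
rewrite sum2 => H0; apply: le_trans H0 _; rewrite le_eqVlt; apply/orP; left; apply/eqP; ring.
Qed.

Lemma psd_diag m (A : 'M[C]_m) x : psd A -> 0 <= A x x.
Proof.
move=> H; have := qf2 x x 1 0 H.
by rewrite conjC0 conjC1 !mul0r !mulr0 !addr0 mul1r mulr1.
Qed.

Lemma psd_herm m (A : 'M[C]_m) x y : psd A -> A y x = (A x y)^*.
Proof. by case=> HA _; rewrite -{1}HA !mxE. Qed.

Lemma psd_minor m (A : 'M[C]_m) x y : psd A -> `|A x y| ^+ 2 <= A x x * A y y.
Proof.
move=> H.
have hx := psd_diag x H; have hy := psd_diag y H.
have hyx := psd_herm x y H.
have cx : (A x x)^* = A x x by apply: conj_ge0.
have cy : (A y y)^* = A y y by apply: conj_ge0.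
have [yp|y0] := boolP (0 < A y y).
  have := qf2 x y (A y y) (- A x y) H.
  rewrite hyx cy rmorphN /=.
  have -> : A y y * A x x * A y y + A y y * A x y * - (A x y)^* +
    - A x y * (A x y)^* * A y y + - A x y * A y y * - (A x y)^* =
    A y y * (A x x * A y y - `|A x y| ^+ 2) by rewrite normCK; ring.
  by rewrite pmulr_rge0 // subr_ge0.
have y0' : A y y = 0.
  by apply/eqP; move: y0 hy; rewrite lt_def negb_and negbK => /orP [/eqP ->|/negP] //.
have [xp|x0] := boolP (0 < A x x).
  have := qf2 y x (A x x) (- A y x) H.
  rewrite (psd_herm y x H) cx rmorphN /= norm_conjC.
  have -> : A x x * A y y * A x x + A x x * A y x * - (A y x)^* +
    - A y x * (A y x)^* * A x x + - A y x * A x x * - (A y x)^* =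
    A x x * (A x x * A y y - `|A y x| ^+ 2) by rewrite normCK; ring.
  by rewrite pmulr_rge0 // subr_ge0.
have x0' : A x x = 0.
  by apply/eqP; move: x0 hx; rewrite lt_def negb_and negbK => /orP [/eqP ->|/negP] //.
have := qf2 x y 1 (- A x y) H.
rewrite hyx x0' y0' rmorphN rmorph1 /=.
have -> : 1 * 0 * 1 + 1 * A x y * - (A x y)^* + - A x y * (A x y)^* * 1 + - A x y * 0 * - (A x y)^*
  = - (`|A x y| ^+ 2 *+ 2) by rewrite normCK; ring.
rewrite oppr_ge0 pmulrn_lle0 // mul0r => H2.
by apply: H2.
Qed.


Lemma density_frob m (A : 'M[C]_m) : density A -> \sum_x \sum_y `|A x y| ^+ 2 <= 1.
Proof.
case=> H t1.
apply: (@le_trans _ _ (\sum_x \sum_y A x x * A y y)).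
  by apply: ler_sum => x _; apply: ler_sum => y _; apply: psd_minor.
by rewrite -big_distrlr /= -/(\tr A) t1 mulr1.
Qed.

Lemma hs_tr m (A B : 'M[C]_m) : adj B = B ->
  \sum_x \sum_y A x y * (B x y)^* = \tr (A *m B).
Proof.
move=> HB; rewrite /mxtrace; apply: eq_bigr => x _; rewrite mxE; apply: eq_bigr => y _.
by rewrite -{2}HB !mxE.
Qed.

Lemma bloch d (A : 'M[C]_d) (L : nat -> 'M[C]_d) : (0 < d)%N ->
  density A -> su_generators L ->
  d%:R^-1 * `|\tr A| ^+ 2 + 2^-1 * \sum_(a < d ^ 2 - 1) `|\tr (A *m L a.+1)| ^+ 2 <= 1.
Proof.
move=> d0 HA [L0 [Lh Lo]].
have Lh' b : (b < d ^ 2)%N -> adj (L b) = L b.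
  case: b => [|b] hb; last by case: (Lh b.+1 hb).
  by rewrite L0; apply/matrixP => x y; rewrite !mxE rmorph_nat eq_sym.
have tr1 : \tr (1%:M : 'M[C]_d) = d%:R by rewrite mxtrace1.
pose c (b : nat) : C := if b == 0%N then d%:R else 2.
have Lo' b b' : (b < d ^ 2)%N -> (b' < d ^ 2)%N -> \tr (L b *m L b') = (b == b')%:R * c b.
  move=> hb hb'; case: b hb => [|b]; case: b' hb' => [|b'] hb' hb.
  - by rewrite L0 mulmx1 tr1 /c /= mul1r.
  - rewrite L0 mul1mx /= mul0r; by case: (Lh b'.+1 hb').
  - rewrite L0 mulmx1 /= mul0r; by case: (Lh b.+1 hb).
  - by rewrite Lo // /c /= mulr_natr.
have := @bessel _ _ _ (fun (b : 'I_(d ^ 2)) (p : 'I_d * 'I_d) => L b p.1 p.2) (fun p => A p.1 p.2).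
have E p' (B : 'M[C]_d) : \sum_(p : 'I_d * 'I_d) B p.1 p.2 * (L p' p.1 p.2)^* = \sum_x \sum_y B x y * (L p' x y)^*.
  by rewrite -(pair_bigA _ (fun x y => B x y * (L p' x y)^*)).
have En (B : 'M[C]_d) : \sum_(p : 'I_d * 'I_d) `|B p.1 p.2| ^+ 2 = \sum_x \sum_y `|B x y| ^+ 2.
  by rewrite -(pair_bigA _ (fun x y => `|B x y| ^+ 2)).
rewrite En => H.
have {}H := H (fun b b' bb => ltac:(by rewrite E hs_tr ?Lh' // Lo' // val_eqE (negbTE bb) mul0r)).
have {}H := le_trans H (density_frob HA).
have F (b : 'I_(d ^ 2)) : (\sum_(p : 'I_d * 'I_d) `|L b p.1 p.2| ^+ 2)^-1 *
   `|\sum_(p : 'I_d * 'I_d) A p.1 p.2 * (L b p.1 p.2)^*| ^+ 2 = (c b)^-1 * `|\tr (A *m L b)| ^+ 2.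
  rewrite E En hs_tr ?Lh' //; congr (_^-1 * _).
  transitivity (\sum_x \sum_y L b x y * (L b x y)^*).
    by apply: eq_bigr => x _; apply: eq_bigr => y _; rewrite normCK.
  by rewrite hs_tr ?Lh' // Lo' // eqxx mul1r.
rewrite (eq_bigr _ (fun b _ => F b)) in H.
have d2 : (0 < d ^ 2)%N by rewrite expn_gt0 d0.
rewrite -(big_mkord xpredT (fun b => (c b)^-1 * `|\tr (A *m L b)| ^+ 2)) big_ltn // in H.
rewrite big_add1 big_mkord /c /= L0 mulmx1 in H.
by rewrite subn1 mulr_sumr.
Qed.

Lemma bloch_corr d (A : 'M[C]_d) (L : nat -> 'M[C]_d) : (0 < d)%N ->
  density A -> su_generators L ->
  \sum_(a < d ^ 2 - 1) `|2^-1 * \tr (A *m L a.+1)| ^+ 2 <= (d%:R - 1) / (2 * d%:R).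
Proof.
move=> d0 HA HL; have H := bloch d0 HA HL.
have dn0 : (d%:R : C) != 0 by rewrite pnatr_eq0 -lt0n.
rewrite HA.2 normr1 expr1n mulr1 addrC -lerBrDr in H.
have h2 : 0 <= (2 : C)^-1 by rewrite invr_ge0 ler0n.
have -> : \sum_(a < d ^ 2 - 1) `|2^-1 * \tr (A *m L a.+1)| ^+ 2 =
  2^-1 * (2^-1 * \sum_(a < d ^ 2 - 1) `|\tr (A *m L a.+1)| ^+ 2).
  rewrite !mulr_sumr; apply: eq_bigr => a _.
  by rewrite normrM exprMn (ger0_norm h2) mulrA expr2.
apply: le_trans (ler_wpM2l h2 H) _; rewrite le_eqVlt; apply/orP; left; apply/eqP.
by field.
Qed.

Lemma bloch_canon d (A : 'M[C]_d) (L : nat -> 'M[C]_d) : (0 < d)%N ->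
  density A -> su_generators L ->
  `|d%:R^-1 * \tr A| ^+ 2 + \sum_(a < d ^ 2 - 1) `|2^-1 * \tr (A *m L a.+1)| ^+ 2
   <= (d%:R ^+ 2 - d%:R + 2) / (2 * d%:R ^+ 2).
Proof.
move=> d0 HA HL; have H := bloch_corr d0 HA HL.
have dn0 : (d%:R : C) != 0 by rewrite pnatr_eq0 -lt0n.
rewrite HA.2 mulr1 normfV normr_nat.
apply: le_trans (lerD (lexx _) H) _; rewrite le_eqVlt; apply/orP; left; apply/eqP.
by field.
Qed.
End Phys.

Section Dec.
Variable C : numClosedFieldType.

Lemma tr_sep n (d : 'I_n -> nat) m (p : 'I_m -> C) (sig : 'I_m -> forall k : 'I_n, 'M[C]_(d k))
  (A : forall k : 'I_n, 'M[C]_(d k)) :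
  \tr ((\sum_i p i *: tens (sig i)) *m tens A) = \sum_i p i * \prod_k \tr (sig i k *m A k).
Proof.
rewrite mulmx_suml raddf_sum /=; apply: eq_bigr => i _.
by rewrite -scalemxAl mxtraceZ tr_tens.
Qed.

Lemma d2pos (x : nat) : (2 <= x)%N -> (0 < x ^ 2 - 1)%N.
Proof. move=> h; rewrite subn_gt0; nia. Qed.

Lemma corr_dec n (d : 'I_n -> nat) (L : forall k : 'I_n, nat -> 'M[C]_(d k)) m (p : 'I_m -> C)
  (sig : 'I_m -> forall k : 'I_n, 'M[C]_(d k)) rho al :
  rho = \sum_i p i *: tens (sig i) ->
  corr L rho al = \sum_i p i * \prod_k (2^-1 * \tr (sig i k *m L k (val (al k)).+1)).
Proof.
move=> ->; rewrite /corr tr_sep mulr_sumr; apply: eq_bigr => i _.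
by rewrite big_split /= prodr_const card_ord exprVn mulrCA.
Qed.

Lemma coef_canon n (d : 'I_n -> nat) (al : MIdx (fun k => d k ^ 2)%N) :
  (forall k, 0 < d k)%N ->
  (\prod_(k < n | val (al k) != 0%N) (d k)%:R)
  / (2 ^+ #|[pred k | val (al k) != 0%N]| * \prod_(k < n) (d k)%:R) =
  \prod_k (if val (al k) != 0%N then 2^-1 else (d k)%:R^-1 : C).
Proof.
move=> d0.
set Dp := \prod_(k < n | val (al k) != 0%N) ((d k)%:R : C).
set Dn := \prod_(k < n | ~~ (val (al k) != 0%N)) ((d k)%:R : C).
have S1 : \prod_(k < n) ((d k)%:R : C) = Dp * Dn.
  by rewrite [LHS](bigID (fun k : 'I_n => val (al k) != 0%N)).
have S2 : \prod_k (if val (al k) != 0%N then 2^-1 else (d k)%:R^-1 : C) =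
  (2^-1) ^+ #|[pred k | val (al k) != 0%N]| * Dn^-1.
  rewrite [LHS](bigID (fun k : 'I_n => val (al k) != 0%N)) /=.
  congr (_ * _).
    rewrite -prodr_const; apply: eq_big => [k|k ->] //.
  by rewrite /Dn -prodfV; apply: eq_bigr => k /negbTE ->.
rewrite S1 S2.
have Dp0 : Dp != 0 by rewrite /Dp prodf_seq_neq0; apply/allP => k _; apply/implyP => _; rewrite pnatr_eq0 -lt0n.
have Dn0 : Dn != 0 by rewrite /Dn prodf_seq_neq0; apply/allP => k _; apply/implyP => _; rewrite pnatr_eq0 -lt0n.
rewrite exprVn; field.
by rewrite Dp0 Dn0 expf_neq0 // pnatr_eq0.
Qed.

Lemma canon_dec n (d : 'I_n -> nat) (L : forall k : 'I_n, nat -> 'M[C]_(d k)) m (p : 'I_m -> C)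
  (sig : 'I_m -> forall k : 'I_n, 'M[C]_(d k)) rho al :
  (forall k, 0 < d k)%N ->
  rho = \sum_i p i *: tens (sig i) ->
  canon_corr L rho al = \sum_i p i * \prod_k
    ((if val (al k) != 0%N then 2^-1 else (d k)%:R^-1) * \tr (sig i k *m L k (val (al k)))).
Proof.
move=> d0 ->; rewrite /canon_corr coef_canon // tr_sep mulr_sumr; apply: eq_bigr => i _.
by rewrite big_split /= mulrCA.
Qed.

Lemma split_first (N : nat) (F : nat -> C) : (0 < N)%N ->
  \sum_(a < N) F (val a) = F 0%N + \sum_(a < N - 1) F (val a).+1.
Proof.
move=> N0; rewrite -(big_mkord xpredT F) big_ltn // big_add1 big_mkord subn1.
by [].
Qed.

Theorem theorem3_main (n : nat) (d : 'I_n -> nat)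
  (L : forall k : 'I_n, nat -> 'M[C]_(d k)) (rho : 'M[C]_(dimH d)) :
  (2 <= n)%N -> (forall k, 2 <= d k)%N ->
  (forall k, su_generators (L k)) ->
  fully_separable rho ->
  let abar p := moment p (corr L rho) in
  let bbar p := moment p (canon_corr L rho) in
  abar 2%N ^+ 2 <=
    abar 3%N * \prod_(k < n) sqrtC (((d k)%:R - 1) / (2 * (d k)%:R))
  /\
  bbar 2%N ^+ 2 <=
    bbar 3%N * \prod_(k < n)
      sqrtC (((d k)%:R ^+ 2 - (d k)%:R + 2) / (2 * (d k)%:R ^+ 2)).
Proof.
move=> n2 d2 HL [m [p [sig [p0 p1 Hs Hrho]]]] abar bbar.
have n0 : (0 < n)%N by apply: leq_trans n2.
have d0 k : (0 < d k)%N by apply: leq_trans (d2 k).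
have [i0 _] : exists i0 : 'I_m, true.
  case: m p p0 p1 sig Hs Hrho => [|m'] p p0 p1 sig Hs Hrho; last by exists ord0.
  by move: p1; rewrite big_ord0 => /eqP; rewrite eq_sym oner_eq0.
split.
  pose u i j (a : 'I_(d j ^ 2 - 1)) := 2^-1 * \tr (sig i j *m L j (val a).+1).
  have Hu i j : \sum_b `|u i j b| ^+ 2 <= ((d j)%:R - 1) / (2 * (d j)%:R).
    exact: (bloch_corr (d0 j) (Hs i j) (HL j)).
  apply: (@moment_bound _ n (fun k => d k ^ 2 - 1)%N m p u) => //.
  - by move=> k; apply: d2pos.
  - by move=> al; rewrite (corr_dec _ _ Hrho).
  - by move=> j; apply: le_trans (Hu i0 j); apply: sum_norm2_ge0.
pose u i j (a : 'I_(d j ^ 2)) := (if val a != 0%N then 2^-1 else (d j)%:R^-1) * \tr (sig i j *m L j (val a)).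
have Hu i j : \sum_b `|u i j b| ^+ 2 <= ((d j)%:R ^+ 2 - (d j)%:R + 2) / (2 * (d j)%:R ^+ 2).
  rewrite /u (split_first (fun a => `|(if a != 0%N then 2^-1 else (d j)%:R^-1) * \tr (sig i j *m L j a)| ^+ 2)); last first.
    by rewrite expn_gt0 d0.
  have [L0 _] := HL j.
  rewrite /= L0 mulmx1.
  exact: (bloch_canon (d0 j) (Hs i j) (HL j)).
apply: (@moment_bound _ n (fun k => d k ^ 2)%N m p u) => //.
- by move=> k; rewrite expn_gt0 d0.
- by move=> al; rewrite (canon_dec _ _ d0 Hrho).
- by move=> j; apply: le_trans (Hu i0 j); apply: sum_norm2_ge0.
Qed.
End Dec.

End Aux.

Theorem theorem3 (C : numClosedFieldType) (n : nat) (d : 'I_n -> nat)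
  (L : forall k : 'I_n, nat -> 'M[C]_(d k)) (rho : 'M[C]_(dimH d)) :
  (2 <= n)%N -> (forall k, 2 <= d k)%N ->
  (forall k, su_generators (L k)) ->
  fully_separable rho ->
  let abar p := moment p (corr L rho) in
  let bbar p := moment p (canon_corr L rho) in
  abar 2%N ^+ 2 <=
    abar 3%N * \prod_(k < n) sqrtC (((d k)%:R - 1) / (2 * (d k)%:R))
  /\
  bbar 2%N ^+ 2 <=
    bbar 3%N * \prod_(k < n)
      sqrtC (((d k)%:R ^+ 2 - (d k)%:R + 2) / (2 * (d k)%:R ^+ 2)).
Proof. exact: Aux.theorem3_main. Qed.
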